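(* Let $G$ be an infinite group such that $[e]_g$ is a subgroup of $G$ for every $g\in G$. Then $G$ has infinitely many conjugacy classes.
   Context: $[x,y]=x^{-1}y^{-1}xy$; $[e]_g=\{[x,g]\mid x\in G\}$. *)

(* Defs.v *)
From Stdlib Require Import List.

Record Group : Type := {
  carrier :> Type;
  gmul : carrier -> carrier -> carrier;
  ginv : carrier -> carrier;
  gone : carrier;
  gmul_assoc : forall x y z, gmul x (gmul y z) = gmul (gmul x y) z;
  gmul_1l : forall x, gmul gone x = x;
  gmul_1r : forall x, gmul x gone = x;
  gmul_Vl : forall x, gmul (ginv x) x = gone;
  gmul_Vr : forall x, gmul x (ginv x) = gone
}.

Arguments gmul {G} : rename.
Arguments ginv {G} : rename.
Arguments gone {G} : rename.

Definition comm {G : Group} (x y : G) : G :=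
  gmul (gmul (gmul (ginv x) (ginv y)) x) y.

Definition comm_set {G : Group} (g : G) : G -> Prop :=
  fun z => exists x : G, z = comm x g.

Definition is_subgroup {G : Group} (H : G -> Prop) : Prop :=
  H gone /\ (forall x y, H x -> H y -> H (gmul x y)) /\ (forall x, H x -> H (ginv x)).

Definition group_finite (G : Group) : Prop :=
  exists l : list G, forall x : G, In x l.

Definition conjugate {G : Group} (x y : G) : Prop :=
  exists z : G, y = gmul (gmul (ginv z) x) z.

Definition finitely_many_classes (G : Group) : Prop :=
  exists l : list G, forall x : G, exists y, In y l /\ conjugate x y.

(* Main.v *)
Require Import Defs.
From Stdlib Require Import List Classical ClassicalEpsilon Arith Lia.

Lemma Vl_r (G : Group) (x y : G) : gmul (ginv x) (gmul x y) = y.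
Proof. rewrite gmul_assoc, gmul_Vl, gmul_1l. reflexivity. Qed.
Lemma Vr_r (G : Group) (x y : G) : gmul x (gmul (ginv x) y) = y.
Proof. rewrite gmul_assoc, gmul_Vr, gmul_1l. reflexivity. Qed.
Lemma inv_uniq (G : Group) (x y : G) : gmul x y = gone -> y = ginv x.
Proof. intro H. rewrite <- (Vl_r G x y), H, gmul_1r. reflexivity. Qed.
Lemma inv_inv (G : Group) (x : G) : ginv (ginv x) = x.
Proof. symmetry. apply inv_uniq. apply gmul_Vl. Qed.
Lemma inv_mul (G : Group) (x y : G) : ginv (gmul x y) = gmul (ginv y) (ginv x).
Proof. symmetry. apply inv_uniq. rewrite <- gmul_assoc, Vr_r, gmul_Vr. reflexivity. Qed.
Lemma inv_one (G : Group) : ginv (@gone G) = gone.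
Proof. symmetry. apply inv_uniq. apply gmul_1l. Qed.

Ltac gs := repeat progress (rewrite ?inv_mul, ?inv_inv, ?inv_one, <-?gmul_assoc,
  ?gmul_Vl, ?gmul_Vr, ?gmul_1l, ?gmul_1r, ?Vl_r, ?Vr_r).

Definition M {G : Group} (a : G) := comm_set (ginv a).
Definition fin_class {G : Group} (a : G) := exists L, forall y, conjugate a y -> In y L.

Lemma conj_M (G : Group) (a y : G) : conjugate a y <-> M a (gmul y (ginv a)).
Proof.
  split.
  - intros [z ->]. exists z. unfold comm. gs. reflexivity.
  - intros [x Hx]. exists x. unfold comm in Hx.
    transitivity (gmul (gmul y (ginv a)) a). gs; reflexivity.
    rewrite Hx. gs; reflexivity.
Qed.

Lemma conj_refl (G : Group) (a : G) : conjugate a a.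
Proof. exists gone. gs. reflexivity. Qed.
Lemma conj_sym (G : Group) (a b : G) : conjugate a b -> conjugate b a.
Proof. intros [z ->]. exists (ginv z). gs. reflexivity. Qed.
Lemma conj_trans (G : Group) (a b c : G) : conjugate a b -> conjugate b c -> conjugate a c.
Proof. intros [z ->] [w ->]. exists (gmul z w). gs. reflexivity. Qed.

Lemma M_sub (G : Group) (Hs : forall g : G, is_subgroup (comm_set g)) (a : G) :
  is_subgroup (M a).
Proof. apply Hs. Qed.

Lemma M_inv1 (G : Group) (Hs : forall g : G, is_subgroup (comm_set g)) (a h : G) :
  conjugate a h -> forall u, M h u -> M a u.
Proof.
  intros Hah u Hu.
  destruct (M_sub G Hs a) as [H1 [Hm Hi]].
  assert (E1 : M a (gmul (gmul u h) (ginv a))).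
  { apply conj_M. apply (conj_trans _ _ h); auto. apply conj_M. gs. exact Hu. }
  assert (E2 : M a (gmul h (ginv a))) by (apply conj_M; auto).
  replace u with (gmul (gmul (gmul u h) (ginv a)) (ginv (gmul h (ginv a)))).
  - apply Hm; auto.
  - gs. reflexivity.
Qed.

Lemma M_inv (G : Group) (Hs : forall g : G, is_subgroup (comm_set g)) (a h : G) :
  conjugate a h -> forall u, M h u <-> M a u.
Proof.
  intros Hah u; split; apply M_inv1; auto. apply conj_sym; auto.
Qed.

Lemma M_normal (G : Group) (Hs : forall g : G, is_subgroup (comm_set g)) (a u z : G) :
  M a u -> M a (gmul (gmul (ginv z) u) z).
Proof.
  intros Hu.
  set (c := gmul (gmul (ginv z) a) z).
  assert (Hc : conjugate a c) by (exists z; reflexivity).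
  apply (M_inv G Hs a c Hc).
  assert (H1 : conjugate c (gmul (gmul (ginv z) (gmul u a)) z)).
  { apply (conj_trans _ _ a). apply conj_sym; auto.
    apply (conj_trans _ _ (gmul u a)).
    - apply conj_M. gs. exact Hu.
    - exists z; reflexivity. }
  apply conj_M in H1.
  replace (gmul (gmul (ginv z) u) z) with
    (gmul (gmul (gmul (ginv z) (gmul u a)) z) (ginv c)); [exact H1|].
  unfold c. gs. reflexivity.
Qed.

Lemma M_mono (G : Group) (Hs : forall g : G, is_subgroup (comm_set g)) (a b : G) :
  M a b -> forall u, M b u -> M a u.
Proof.
  intros Hb u [x ->].
  destruct (M_sub G Hs a) as [H1 [Hm Hi]].
  unfold comm. rewrite inv_inv.
  apply Hm.
  - apply M_normal; auto.
  - apply Hi; auto.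
Qed.

Lemma cover (G : Group) (l : list G) : forall (P : G -> Prop),
  (forall x, P x -> exists r, In r l /\ conjugate x r /\ fin_class r) ->
  exists L, forall x, P x -> In x L.
Proof.
  induction l as [|r l IH]; intros P HP.
  - exists nil. intros x Px. destruct (HP x Px) as [r [[] _]].
  - destruct (classic (fin_class r)) as [[Lr HLr]|Hn].
    + destruct (IH (fun x => P x /\ ~ conjugate x r)) as [L' HL'].
      { intros x [Px Hnc]. destruct (HP x Px) as [r' [[<-|Hin] [Hc Hf]]].
        - contradiction.
        - exists r'; auto. }
      exists (Lr ++ L'). intros x Px. apply in_or_app.
      destruct (classic (conjugate x r)) as [Hc|Hc].
      * left. apply HLr. apply conj_sym; auto.
      * right. apply HL'; auto.
    + apply IH. intros x Px. destruct (HP x Px) as [r' [[<-|Hin] [Hc Hf]]].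
      * contradiction.
      * exists r'; auto.
Qed.

Definition dec (Q : Prop) : bool := if excluded_middle_informative Q then true else false.
Lemma dec_true (Q : Prop) : dec Q = true <-> Q.
Proof. unfold dec; destruct (excluded_middle_informative Q); split; intros; auto; discriminate. Qed.

Lemma filt_le (A : Type) (f1 f2 : A -> bool) (l : list A) :
  (forall r, f1 r = true -> f2 r = true) ->
  length (filter f1 l) <= length (filter f2 l).
Proof.
  intros H; induction l as [|r l IH]; simpl; auto.
  destruct (f1 r) eqn:E1.
  - rewrite (H r E1). simpl. lia.
  - destruct (f2 r); simpl; lia.
Qed.

Lemma filt_lt (A : Type) (f1 f2 : A -> bool) (l : list A) :
  (forall r, f1 r = true -> f2 r = true) ->
  (exists r, In r l /\ f1 r = false /\ f2 r = true) ->
  length (filter f1 l) < length (filter f2 l).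
Proof.
  intros H; induction l as [|r l IH]; simpl.
  - intros [r [[] _]].
  - intros [r' [[<-|Hin] [E1 E2]]].
    + rewrite E1, E2. simpl. pose proof (filt_le A f1 f2 l H). lia.
    + assert (Hl := IH (ex_intro _ r' (conj Hin (conj E1 E2)))).
      destruct (f1 r) eqn:F1.
      * rewrite (H r F1). simpl. lia.
      * destruct (f2 r); simpl; lia.
Qed.

Definition Sub {G : Group} (g r : G) := forall u, M r u -> M g u.
Definition cnt {G : Group} (l : list G) (g : G) :=
  length (filter (fun r => dec (Sub g r)) l).

Lemma step (G : Group) (Hs : forall g : G, is_subgroup (comm_set g)) (l : list G)
  (Hl : forall x : G, exists y, In y l /\ conjugate x y) (g : G) :
  ~ fin_class g -> exists h, ~ fin_class h /\ cnt l h < cnt l g.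
Proof.
  intros Hg.
  assert (HMg : ~ exists L, forall u, M g u -> In u L).
  { intros [L HL]. apply Hg. exists (map (fun u => gmul u g) L).
    intros y Hy. apply conj_M in Hy. apply HL in Hy.
    apply (in_map (fun u => gmul u g)) in Hy.
    replace y with (gmul (gmul y (ginv g)) g); [exact Hy|]. gs. reflexivity. }
  assert (Hh : exists h, M g h /\ ~ fin_class h).
  { apply NNPP. intro Hn. apply HMg. apply (cover G l).
    intros x Hx. destruct (Hl x) as [r [Hr Hc]]. exists r. repeat split; auto.
    assert (Hfx : fin_class x).
    { apply NNPP. intro Hnf. apply Hn. exists x; auto. }
    destruct Hfx as [L HL]. exists L. intros y Hy. apply HL.
    apply (conj_trans _ _ r); auto. }
  destruct Hh as [h [Hgh Hfh]].
  exists h; split; auto.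
  destruct (M_sub G Hs g) as [H1 [Hm Hi]].
  destruct (classic (Sub h g)) as [Hhg|Hhg].
  - exfalso. apply Hfh.
    assert (He : h = gone).
    { assert (Hc : conjugate h gone).
      { apply conj_M. gs. apply Hhg. apply Hi. exact Hgh. }
      destruct Hc as [z Hz].
      transitivity (gmul (gmul z (gmul (gmul (ginv z) h) z)) (ginv z)).
      gs; reflexivity. rewrite <- Hz. gs. reflexivity. }
    subst h. exists (gone :: nil). intros y [z ->]. left. gs. reflexivity.
  - unfold cnt. apply filt_lt.
    + intros r Hr. apply (proj1 (dec_true _)) in Hr. apply (proj2 (dec_true _)).
      intros u Hu. apply (M_mono G Hs g h Hgh). apply Hr; auto.
    + destruct (Hl g) as [r [Hr Hc]]. exists r. repeat split; auto.
      * destruct (dec (Sub h r)) eqn:E; auto. apply (proj1 (dec_true _)) in E.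
        exfalso. apply Hhg. intros u Hu. apply E. apply (M_inv G Hs g r Hc). auto.
      * apply (proj2 (dec_true _)). intros u Hu. apply (M_inv G Hs g r Hc). auto.
Qed.

Theorem mainTheorem7 (G : Group) :
  ~ group_finite G ->
  (forall g : G, is_subgroup (comm_set g)) ->
  ~ finitely_many_classes G.
Proof.
  intros Hinf Hs [l Hl].
  assert (Hg : exists g : G, ~ fin_class g).
  { apply NNPP. intro Hn. apply Hinf.
    destruct (cover G l (fun _ => True)) as [L HL].
    - intros x _. destruct (Hl x) as [r [Hr Hc]]. exists r. repeat split; auto.
      apply NNPP. intro Hf. apply Hn. exists r; auto.
    - exists L. intros x; apply HL; auto. }
  destruct Hg as [g Hg].
  assert (D : forall n g, cnt l g <= n -> ~ fin_class g -> False).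
  { induction n as [|n IH]; intros g' Hc Hf;
      destruct (step G Hs l Hl g' Hf) as [h [Hh Hlt]].
    - lia.
    - apply (IH h); auto. lia. }
  exact (D _ g (le_n _) Hg).
Qed.
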